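(* Let $P$ be any of cost-SR, cost-PR, cost-SPR, cost-LPR, cost-BC. The system MaxSAT resolution $+$ $P$ is complete: for every MaxSAT instance with satisfiable hard clauses $H_0=\{C_1\lor b_1,\dots,C_m\lor b_m\}$ and soft clauses $S_0=\{\lnot b_1,\dots,\lnot b_m\}$ and with $\mathrm{cost}(H_0)=k$, there is a MaxSAT resolution $+$ $P$ derivation $(H_0,S_0),\dots,(H_t,S_t)$ such that $S_t$ contains $k$ copies of the empty clause $\bot$.
   Context: $b_1,\dots,b_m$ are distinct blocking variables not occurring in $C_1,\dots,C_m$; $\mathrm{cost}(\alpha)=\sum_i\alpha(b_i)$, $\mathrm{cost}(H)=\min\{\mathrm{cost}(\alpha):\alpha\text{ total},\alpha\models H\}$. Notation: substitutions map variables to $0,1$ or literals; $(\sigma\circ\tau)(x)=\sigma(\tau(x))$; $C{\upharpoonright}_\sigma$ and $\Gamma{\upharpoonright}_\sigma$ denote restriction (clauses set to $1$ removed); $\lnot C$ is the partial assignment falsifying $C$; $\Gamma\vdash_1 C$ means unit propagation on $\Gamma{\upharpoonright}_{\lnot C}$ derives $\bot$. $C$ is cost-SR w.r.t. $\Gamma$ if some substitution $\sigma$ satisfies (1) $\Gamma{\upharpoonright}_{\lnot C}\vdash_1(\Gamma\cup\{C\}){\upharpoonright}_\sigma$ and (2) $\mathrm{cost}(\tau\circ\sigma)\le\mathrm{cost}(\tau)$ for all total $\tau\supseteq\lnot C$; cost-PR if $\sigma$ can be a partial assignment; cost-SPR if a partial assignment with the same domain as $\lnot C$; cost-LPR if moreover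 it differs from $\lnot C$ on exactly one variable. $C\lor\ell$ is cost-BC w.r.t. $\Gamma$ if for every $D\lor\lnot\ell\in\Gamma$, $C\lor D$ is a tautology, and $\ell$ is not a positive blocking variable. A MaxSAT resolution $+$ $P$ derivation is a sequence of pairs of multisets $(H_i,S_i)$ where each step is one of: (a) $S_i=S_{i-1}$, $H_i=H_{i-1}\cup\{C\}$ with $C$ obtained by resolution (or weakening) from $H_{i-1}$; (a') $S_i=S_{i-1}$, $H_i=H_{i-1}\cup\{C\}$ with $C$ satisfying $P$ w.r.t. $H_{i-1}$; (b) $S_i=S_{i-1}\cup\{C\}$ for some $C\in H_{i-1}$, $H_i=H_{i-1}$; (c) $S_i=S_{i-1}\setminus\{C\}\cup\{C\lor x,C\lor\lnot x\}$ for $C\in S_{i-1}$, $H_i=H_{i-1}$; (d) $S_i=S_{i-1}\setminus\{C\lor x,C\lor\lnot x\}\cup\{C\}$ for $\{C\lor x,C\lor\lnot x\}\subseteq S_{i-1}$, $H_i=H_{i-1}$. *)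

(* Defs.v *)
From Stdlib Require Import List Arith Bool Permutation.
Import ListNotations.

(** Variables are natural numbers; a literal is (x, true) = x or (x, false) = ~x. *)
Definition var := nat.
Definition literal : Type := (nat * bool)%type.
Definition lvar (l : literal) : var := fst l.
Definition lneg (l : literal) : literal := (fst l, negb (snd l)).

(** A clause is the disjunction of the literals of a list (read as a set). *)
Definition clause : Type := list literal.
(** Multisets of clauses are lists (read up to permutation). *)
Definition cnf : Type := list clause.

Definition lit_eq_dec : forall l1 l2 : literal, {l1 = l2} + {l1 <> l2}.
Proof. decide equality; [apply bool_dec | apply Nat.eq_dec]. Defined.

Definition clause_vars (C : clause) : list var := map lvar C.
Definition tautology (C : clause) : Prop := exists l, In l C /\ In (lneg l) C.
Definition clause_equiv (C D : clause) : Prop := incl C D /\ incl D C.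

Definition assignment := nat -> bool.
Definition eval_lit (a : assignment) (l : literal) : bool :=
  if snd l then a (fst l) else negb (a (fst l)).
Definition sat_clause (a : assignment) (C : clause) : Prop :=
  exists l, In l C /\ eval_lit a l = true.
Definition sat_cnf (a : assignment) (F : cnf) : Prop :=
  forall C, In C F -> sat_clause a C.

Definition cost (B : list var) (a : assignment) : nat :=
  fold_right (fun b acc => (if a b then 1 else 0) + acc) 0 B.
Definition is_cost (B : list var) (H : cnf) (k : nat) : Prop :=
  (exists a, sat_cnf a H /\ cost B a = k) /\
  (forall a, sat_cnf a H -> k <= cost B a).

Inductive img : Type := IConst (b : bool) | ILit (l : literal).
Definition subst := nat -> img.
Definition img_neg (i : img) : img :=
  match i with IConst b => IConst (negb b) | ILit l => ILit (lneg l) end.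
Definition subst_lit (s : subst) (l : literal) : img :=
  if snd l then s (fst l) else img_neg (s (fst l)).
Definition eval_img (a : assignment) (i : img) : bool :=
  match i with IConst b => b | ILit l => eval_lit a l end.
Definition compose (a : assignment) (s : subst) : assignment :=
  fun x => eval_img a (s x).

(** Restriction: C|sigma; None if C is set to 1 (and then removed). *)
Definition restrict_clause (s : subst) (C : clause) : option clause :=
  if existsb (fun l => match subst_lit s l with IConst true => true | _ => false end) C
  then None
  else Some (flat_map (fun l => match subst_lit s l with
                                | ILit l' => [l'] | IConst _ => [] end) C).
Definition restrict (s : subst) (F : cnf) : cnf :=
  flat_map (fun C => match restrict_clause s C with Some D => [D] | None => [] end) F.

(** ~C : the partial assignment falsifying C (as a substitution that is the
    identity outside the variables of C). *)
Definition neg_clause (C : clause) : subst :=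
  fun x => match find (fun l => Nat.eqb (fst l) x) C with
           | Some l => IConst (negb (snd l))
           | None => ILit (x, true)
           end.

Definition assign_lit (l : literal) : subst :=
  fun x => if Nat.eqb x (fst l) then IConst (snd l) else ILit (x, true).

Inductive up_refutes : cnf -> Prop :=
| up_empty : forall F, In [] F -> up_refutes F
| up_unit : forall F D l, In D F -> In l D -> Forall (eq l) D ->
    up_refutes (restrict (assign_lit l) F) -> up_refutes F.

Definition up_implies (G : cnf) (C : clause) : Prop :=
  up_refutes (restrict (neg_clause C) G).

Definition extends_neg (a : assignment) (C : clause) : Prop :=
  forall l, In l C -> eval_lit a l = false.

Definition cost_witness (B : list var) (G : cnf) (C : clause) (s : subst) : Prop :=
  (forall D, In D (restrict s (C :: G)) -> up_implies (restrict (neg_clause C) G) D)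
  /\ (forall a, extends_neg a C -> cost B (compose a s) <= cost B a).

Definition is_partial_assignment (s : subst) : Prop :=
  forall x, (exists b, s x = IConst b) \/ s x = ILit (x, true).
Definition assigns (s : subst) (x : var) : Prop := exists b, s x = IConst b.

Definition cost_SR B G C := exists s, cost_witness B G C s.
Definition cost_PR B G C := exists s, is_partial_assignment s /\ cost_witness B G C s.
Definition cost_SPR B G C :=
  exists s, is_partial_assignment s /\
    (forall x, assigns s x <-> In x (clause_vars C)) /\ cost_witness B G C s.
Definition cost_LPR B G C :=
  exists s, is_partial_assignment s /\
    (forall x, assigns s x <-> In x (clause_vars C)) /\
    (exists x, In x (clause_vars C) /\ s x <> neg_clause C x /\
       forall y, In y (clause_vars C) -> s y <> neg_clause C y -> y = x) /\
    cost_witness B G C s.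
(** C \/ l is cost-BC: C = E with l removed; every D \/ ~l in G gives a
    tautology C \/ D; l is not a positive blocking variable. *)
Definition cost_BC (B : list var) (G : cnf) (E : clause) : Prop :=
  exists l, In l E /\ ~ (snd l = true /\ In (fst l) B) /\
    forall D', In D' G -> In (lneg l) D' ->
      tautology (remove lit_eq_dec l E ++ remove lit_eq_dec (lneg l) D').

Inductive redundancy := RSR | RPR | RSPR | RLPR | RBC.
Definition redundant (P : redundancy) : list var -> cnf -> clause -> Prop :=
  match P with
  | RSR => cost_SR | RPR => cost_PR | RSPR => cost_SPR
  | RLPR => cost_LPR | RBC => cost_BC end.

Definition res_or_weak (H : cnf) (C : clause) : Prop :=
  (exists D1 D2 x, In D1 H /\ In D2 H /\ In (x, true) D1 /\ In (x, false) D2 /\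
     clause_equiv C (remove lit_eq_dec (x, true) D1 ++ remove lit_eq_dec (x, false) D2))
  \/ (exists D, In D H /\ incl D C).

Inductive step (P : redundancy) (B : list var) : cnf * cnf -> cnf * cnf -> Prop :=
| step_a : forall H S H' C, res_or_weak H C -> Permutation H' (C :: H) ->
    step P B (H, S) (H', S)
| step_a' : forall H S H' C, redundant P B H C -> Permutation H' (C :: H) ->
    step P B (H, S) (H', S)
| step_b : forall H S S' C, In C H -> Permutation S' (C :: S) ->
    step P B (H, S) (H, S')
| step_c : forall H S S' R C x C1 C2,
    Permutation S (C :: R) ->
    clause_equiv C1 ((x, true) :: C) -> clause_equiv C2 ((x, false) :: C) ->
    Permutation S' (C1 :: C2 :: R) ->
    step P B (H, S) (H, S')
| step_d : forall H S S' R C x C1 C2,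
    Permutation S (C1 :: C2 :: R) ->
    clause_equiv C1 ((x, true) :: C) -> clause_equiv C2 ((x, false) :: C) ->
    Permutation S' (C :: R) ->
    step P B (H, S) (H, S').

Inductive derives (P : redundancy) (B : list var) : cnf * cnf -> cnf * cnf -> Prop :=
| derives_refl : forall st, derives P B st st
| derives_step : forall st1 st2 st3, step P B st1 st2 -> derives P B st2 st3 ->
    derives P B st1 st3.

Definition is_empty_clause (C : clause) : bool :=
  match C with [] => true | _ => false end.
Definition count_empty (S : cnf) : nat := length (filter is_empty_clause S).

(** The instance: pairs (C_i, b_i). *)
Definition blocking (inst : list (clause * var)) : list var := map snd inst.
Definition hard0 (inst : list (clause * var)) : cnf :=
  map (fun p => fst p ++ [(snd p, true)]) inst.
Definition soft0 (inst : list (clause * var)) : cnf :=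
  map (fun p => [(snd p, false)]) inst.

(* Main.v *)
Require Import Defs.
From Stdlib Require Import List Arith Lia Permutation Classical.
Import ListNotations.

Definition reach P B H S T := derives P B (H, S) (H, T).

Lemma derives_trans P B : forall s1 s2 s3, derives P B s1 s2 -> derives P B s2 s3 -> derives P B s1 s3.
Proof. induction 1; intros; [assumption| econstructor; eauto]. Qed.

Lemma perm_step P B H S S2 : Permutation S S2 -> reach P B H S S2.
Proof.
  intros Hp. unfold reach. destruct S as [|c R].
  - apply Permutation_nil in Hp. subst. constructor.
  - eapply derives_step.
    + eapply (step_c P B H (c::R) (((0,true)::c) :: ((0,false)::c) :: R) R c 0).
      * apply Permutation_refl.
      * split; apply incl_refl.
      * split; apply incl_refl.
      * apply Permutation_refl.
    + eapply derives_step; [|constructor].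
      eapply (step_d P B H _ S2 R c 0 ((0,true)::c) ((0,false)::c)).
      * apply Permutation_refl.
      * split; apply incl_refl.
      * split; apply incl_refl.
      * apply Permutation_sym; exact Hp.
Qed.

Lemma reach_trans P B H S T U : reach P B H S T -> reach P B H T U -> reach P B H S U.
Proof. apply derives_trans. Qed.

Lemma reach_perm P B H S T S' T' : reach P B H S T -> Permutation S S' -> Permutation T T' -> reach P B H S' T'.
Proof.
  intros R1 p1 p2. eapply reach_trans; [apply perm_step, Permutation_sym, p1|].
  eapply reach_trans; [exact R1| apply perm_step, p2].
Qed.

Lemma derives_frame P B : forall st1 st2, derives P B st1 st2 -> forall X,
  derives P B (fst st1, snd st1 ++ X) (fst st2, snd st2 ++ X).
Proof.
  induction 1 as [|st1 st2 st3 Hs Hd IH]; intros X; [constructor|].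
  eapply derives_step; [|apply IH].
  destruct Hs; simpl.
  - eapply step_a; eauto.
  - eapply step_a'; eauto.
  - eapply step_b; eauto. apply (Permutation_app_tail X) in H1. exact H1.
  - eapply (step_c P B H (S ++ X) (S' ++ X) (R ++ X) C x C1 C2); eauto.
    + apply (Permutation_app_tail X) in H0. exact H0.
    + apply (Permutation_app_tail X) in H3. exact H3.
  - eapply (step_d P B H (S ++ X) (S' ++ X) (R ++ X) C x C1 C2); eauto.
    + apply (Permutation_app_tail X) in H0. exact H0.
    + apply (Permutation_app_tail X) in H3. exact H3.
Qed.

Lemma reach_suffix P B H S T X : reach P B H S T -> reach P B H (S ++ X) (T ++ X).
Proof. intros R1. exact (derives_frame P B _ _ R1 X). Qed.

Lemma reach_prefix P B H S T X : reach P B H S T -> reach P B H (X ++ S) (X ++ T).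
Proof.
  intros R1. eapply reach_perm; [apply (reach_suffix _ _ _ _ _ X R1)| apply Permutation_app_comm | apply Permutation_app_comm].
Qed.

Lemma equiv_step P B H c c' R : clause_equiv c c' -> reach P B H (c :: R) (c' :: R).
Proof.
  intros [i1 i2]. unfold reach.
  eapply derives_step.
  - eapply (step_c P B H (c::R) (((0,true)::c) :: ((0,false)::c) :: R) R c 0).
    + apply Permutation_refl.
    + split; apply incl_refl.
    + split; apply incl_refl.
    + apply Permutation_refl.
  - eapply derives_step; [|constructor].
    eapply (step_d P B H _ (c'::R) R c' 0 ((0,true)::c) ((0,false)::c)).
    + apply Permutation_refl.
    + split; apply incl_cons; simpl; auto; intros l Hl; simpl; right; auto.
    + split; apply incl_cons; simpl; auto; intros l Hl; simpl; right; auto.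
    + apply Permutation_refl.
Qed.

Lemma equiv_list P B H L L' R : Forall2 clause_equiv L L' -> reach P B H (L ++ R) (L' ++ R).
Proof.
  induction 1; simpl; [constructor|].
  eapply reach_trans; [apply equiv_step; eassumption|].
  apply (reach_prefix _ _ _ _ _ [y]). assumption.
Qed.

Lemma pointwise P B H (A : Type) (f : A -> clause) (F : A -> cnf) :
  (forall a R, reach P B H (f a :: R) (F a ++ R)) ->
  forall L R, reach P B H (map f L ++ R) (concat (map F L) ++ R).
Proof.
  intros HF L. induction L as [|a L IH]; intros R; simpl; [constructor|].
  eapply reach_trans; [apply HF|]. rewrite <- app_assoc. apply reach_prefix. apply IH.
Qed.

Lemma add_hard P B H S L : (forall C, In C L -> In C H) -> reach P B H S (L ++ S).
Proof.
  induction L as [|c L IH]; intros HL; simpl; [constructor|].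
  eapply reach_trans; [apply IH; intros; apply HL; simpl; auto|].
  eapply derives_step; [|constructor]. eapply step_b; [apply HL; simpl; auto| apply Permutation_refl].
Qed.

Lemma add_weak P B H S L : (forall C, In C L -> exists D, In D H /\ incl D C) ->
  derives P B (H, S) (L ++ H, S).
Proof.
  induction L as [|c L IH]; intros HL; simpl; [constructor|].
  eapply derives_trans; [apply IH; intros; apply HL; simpl; auto|].
  eapply derives_step; [|constructor]. eapply step_a; [|apply Permutation_refl].
  right. destruct (HL c (or_introl eq_refl)) as [D [HD1 HD2]]. exists D; split; auto.
  apply in_or_app; auto.
Qed.

Fixpoint E (C : clause) (V : list var) : cnf :=
  match V with [] => [C] | x :: V' => E ((x,true)::C) V' ++ E ((x,false)::C) V' end.

Lemma E_app V : forall C, E C V = map (fun p => p ++ C) (E [] V).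
Proof.
  induction V as [|x V IH]; intros C; simpl; [reflexivity|].
  rewrite !(IH (_ :: _)).
  rewrite map_app, !map_map. f_equal; apply map_ext; intros; rewrite <- app_assoc; reflexivity.
Qed.

Lemma tree_merge P B H V : forall C R, reach P B H (E C V ++ R) (C :: R).
Proof.
  induction V as [|x V IH]; intros C R; simpl; [constructor|].
  rewrite <- app_assoc.
  eapply reach_trans; [apply IH|].
  eapply reach_trans; [eapply reach_perm; [apply (IH ((x,false)::C) (((x,true)::C)::R))| |apply Permutation_refl]|].
  - apply Permutation_sym, Permutation_middle.
  - eapply derives_step; [|constructor].
    eapply (step_d P B H _ (C::R) R C x ((x,true)::C) ((x,false)::C)).
    + apply perm_swap.
    + split; apply incl_refl.
    + split; apply incl_refl.
    + apply Permutation_refl.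
Qed.

Lemma tree_split P B H V : forall C R, reach P B H (C :: R) (E C V ++ R).
Proof.
  induction V as [|x V IH]; intros C R; simpl; [constructor|].
  eapply derives_step.
  - eapply (step_c P B H (C::R) (((x,true)::C) :: ((x,false)::C) :: R) R C x).
    + apply Permutation_refl.
    + split; apply incl_refl.
    + split; apply incl_refl.
    + apply Permutation_refl.
  - eapply reach_trans; [apply IH|].
    eapply reach_perm; [apply (IH ((x,false)::C) (E ((x,true)::C) V ++ R))| |].
    + apply Permutation_middle.
    + rewrite !app_assoc. apply Permutation_app_tail, Permutation_app_comm.
Qed.

Lemma E_sem V : forall C q, NoDup V -> In q (E C V) -> exists a : assignment,
  forall l, In l q -> In l C \/ (In (fst l) V /\ eval_lit a l = false).
Proof.
  induction V as [|x V IH]; intros C q Hnd Hq; simpl in Hq.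
  - destruct Hq as [<-|[]]. exists (fun _ => true). auto.
  - inversion Hnd; subst.
    assert (G : forall s, In q (E ((x,s)::C) V) -> exists a : assignment,
      forall l, In l q -> In l C \/ (In (fst l) (x::V) /\ eval_lit a l = false)).
    { intros s Hs. destruct (IH _ _ H2 Hs) as [a' Ha'].
      exists (fun y => if Nat.eqb y x then negb s else a' y).
      intros l Hl. destruct (Ha' l Hl) as [[<-|Hc]|[Hv He]].
      - right. simpl. split; auto. unfold eval_lit; simpl. rewrite Nat.eqb_refl. destruct s; auto.
      - left; auto.
      - right. split; [simpl; auto|]. unfold eval_lit in *.
        destruct (Nat.eqb (fst l) x) eqn:Ex; [apply Nat.eqb_eq in Ex; subst; contradiction|]. exact He. }
    apply in_app_or in Hq. destruct Hq; eapply G; eauto.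
Qed.

Lemma E_cov V : forall C q, In q (E C V) -> (forall y, In y V -> exists b, In (y,b) q) /\ incl C q.
Proof.
  induction V as [|x V IH]; intros C q Hq; simpl in Hq.
  - destruct Hq as [<-|[]]. split; [intros _ []| apply incl_refl].
  - apply in_app_or in Hq. destruct Hq as [Hq|Hq]; destruct (IH _ _ Hq) as [H1 H2];
      (split; [intros y [<-|Hy]; [eexists; apply H2; simpl; auto| auto] | intros l Hl; apply H2; simpl; auto]).
Qed.

Definition cdec := list_eq_dec lit_eq_dec.
Definition cnt (L : cnf) (q : clause) := count_occ cdec L q.

Lemma sub_perm : forall (T S : cnf), (forall x, cnt T x <= cnt S x) -> exists Rr, Permutation S (T ++ Rr).
Proof.
  induction T as [|t T IH]; intros S HS; simpl.
  - exists S. apply Permutation_refl.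
  - assert (Hin : In t S).
    { apply (count_occ_In cdec). specialize (HS t). unfold cnt in HS. simpl in HS.
      destruct (cdec t t); [lia| congruence]. }
    apply in_split in Hin. destruct Hin as [S1 [S2 ->]].
    destruct (IH (S1 ++ S2)) as [Rr HR].
    + intros x. specialize (HS x). unfold cnt in *. simpl in HS.
      rewrite count_occ_app in *. simpl in HS. destruct (cdec t x); lia.
    + exists Rr. eapply perm_trans; [apply Permutation_sym, Permutation_middle|]. simpl. constructor. exact HR.
Qed.

Lemma cnt_app L1 L2 q : cnt (L1 ++ L2) q = cnt L1 q + cnt L2 q.
Proof. apply count_occ_app. Qed.

Lemma cnt_concat_repeat k L q : cnt (concat (repeat L k)) q = k * cnt L q.
Proof. induction k; simpl; [reflexivity|]. rewrite cnt_app, IHk. lia. Qed.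

Lemma cnt_filter f L q : cnt (filter f L) q = if f q then cnt L q else 0.
Proof.
  induction L as [|p L IH]; simpl; [destruct (f q); reflexivity|].
  unfold cnt in *. destruct (f p) eqn:Ep; simpl; destruct (cdec p q); subst; rewrite ?Ep, IH;
   destruct (f q); auto; congruence.
Qed.

Definition good (b : var) (q : clause) : bool := if in_dec lit_eq_dec (b,false) q then true else false.
Definition g (b : var) (p : clause) : clause := if good b p then p else p ++ [(b,false)].

Lemma cnt_map_g b L q : (if good b q then cnt L q else 0) <= cnt (map (g b) L) q.
Proof.
  induction L as [|p L IH]; simpl; [destruct (good b q); auto|].
  unfold cnt in *. simpl. destruct (good b q) eqn:Eq.
  - destruct (cdec p q); subst.
    + assert (Hgq : g b q = q) by (unfold g; rewrite Eq; reflexivity).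
      rewrite Hgq. destruct (cdec q q); [|congruence]. lia.
    + destruct (cdec (g b p) q); lia.
  - lia.
Qed.

Fixpoint numgood (inst : list (clause * var)) (q : clause) : nat :=
  match inst with [] => 0 | pr :: r => (if good (snd pr) q then 1 else 0) + numgood r q end.

Lemma cnt_soft inst L q : cnt L q * numgood inst q <= cnt (concat (map (fun pr => map (g (snd pr)) L) inst)) q.
Proof.
  induction inst as [|pr r IH]; simpl; [lia|]. rewrite cnt_app.
  pose proof (cnt_map_g (snd pr) L q). destruct (good (snd pr) q); lia.
Qed.

Lemma cost_numgood (a : assignment) inst q : (forall pr, In pr inst -> a (snd pr) = true -> good (snd pr) q = true) ->
  cost (blocking inst) a <= numgood inst q.
Proof.
  induction inst as [|pr r IH]; intros Hg; [simpl; lia|].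
  change (cost (blocking (pr::r)) a) with ((if a (snd pr) then 1 else 0) + cost (blocking r) a).
  change (numgood (pr::r) q) with ((if good (snd pr) q then 1 else 0) + numgood r q).
  assert (cost (blocking r) a <= numgood r q) by (apply IH; intros; apply Hg; simpl; auto).
  destruct (a (snd pr)) eqn:Ea.
  - assert (Hh : good (snd pr) q = true) by (apply Hg; [left; reflexivity| exact Ea]).
    rewrite Hh. lia.
  - destruct (good (snd pr) q); lia.
Qed.

Definition Vof (inst : list (clause * var)) : list var :=
  nodup Nat.eq_dec (flat_map clause_vars (hard0 inst)).
Definition hcb (inst : list (clause * var)) (q : clause) : bool :=
  existsb (fun h => forallb (fun l => if in_dec lit_eq_dec l q then true else false) h) (hard0 inst).

Lemma eval_det (a : assignment) y s b : eval_lit a (y,s) = false -> eval_lit a (y,b) = false -> s = b.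
Proof. unfold eval_lit; simpl. destruct s, b, (a y); simpl; congruence. Qed.

Lemma inV inst h l : In h (hard0 inst) -> In l h -> In (fst l) (Vof inst).
Proof.
  intros Hh Hl. unfold Vof. apply nodup_In. apply in_flat_map. exists h. split; auto.
  unfold clause_vars. apply in_map_iff. exists l; auto.
Qed.

Lemma leaf_ok inst k q : is_cost (blocking inst) (hard0 inst) k -> In q (E [] (Vof inst)) ->
  hcb inst q = true \/ k <= numgood inst q.
Proof.
  intros [_ Hmin] Hq.
  destruct (E_sem _ [] q (NoDup_nodup _ _) Hq) as [a Ha].
  destruct (E_cov _ _ _ Hq) as [Hc _].
  assert (det : forall l, In (fst l) (Vof inst) -> eval_lit a l = false -> In l q).
  { intros [y s] Hy He. destruct (Hc y Hy) as [b Hb].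
    destruct (Ha _ Hb) as [[]|[_ Hb']]. simpl in *. rewrite (eval_det a y s b He Hb'). exact Hb. }
  destruct (classic (exists h, In h (hard0 inst) /\ forall l, In l h -> eval_lit a l = false)) as [[h [Hh Hl]]|Hn].
  - left. unfold hcb. apply existsb_exists. exists h. split; auto.
    apply forallb_forall. intros l Hl'. destruct (in_dec lit_eq_dec l q) as [|n]; auto.
    exfalso. apply n. apply det; [eapply inV; eauto| auto].
  - right. assert (Hs : sat_cnf a (hard0 inst)).
    { intros C HC. apply NNPP. intros Hns. apply Hn. exists C. split; auto.
      intros l Hl. destruct (eval_lit a l) eqn:El; auto. exfalso. apply Hns. exists l; auto. }
    eapply Nat.le_trans; [apply (Hmin a Hs)|]. apply cost_numgood.
    intros pr Hpr Ea. unfold good. destruct (in_dec _ _ _) as [|n]; auto.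
    exfalso. apply n. apply det.
    + simpl. apply (inV inst (fst pr ++ [(snd pr, true)]) (snd pr, true)).
      * unfold hard0. apply in_map_iff. exists pr; auto.
      * apply in_or_app. simpl; auto.
    + unfold eval_lit. simpl. rewrite Ea. reflexivity.
Qed.

Lemma forall2_g b L : Forall2 clause_equiv (map (fun p => p ++ [(b,false)]) L) (map (g b) L).
Proof.
  induction L as [|p L IH]; simpl; constructor; auto.
  unfold g, good. destruct (in_dec _ _ _); cbv beta iota.
  - split; intros l Hl; auto. apply in_app_or in Hl. destruct Hl as [|[<-|[]]]; auto.
    apply in_or_app; auto.
  - split; apply incl_refl.
Qed.

Lemma merge_k P B H V k : forall Rr, reach P B H (concat (repeat (E [] V) k) ++ Rr) (repeat [] k ++ Rr).
Proof.
  induction k; intros Rr; simpl; [constructor|].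
  rewrite <- app_assoc. eapply reach_trans; [apply tree_merge|].
  apply (reach_prefix _ _ _ _ _ [[]]). apply IHk.
Qed.

Lemma count_empty_rep k Rr : k <= count_empty (repeat [] k ++ Rr).
Proof.
  unfold count_empty. rewrite filter_app, length_app. induction k; simpl; lia.
Qed.

Theorem theorem7p2 :
  forall (P : redundancy) (inst : list (clause * var)) (k : nat),
    NoDup (blocking inst) ->
    (forall Ci b, In Ci (map fst inst) -> In b (blocking inst) ->
       ~ In b (clause_vars Ci)) ->
    (exists a, sat_cnf a (hard0 inst)) ->
    is_cost (blocking inst) (hard0 inst) k ->
    exists Ht St,
      derives P (blocking inst) (hard0 inst, soft0 inst) (Ht, St) /\
      k <= count_empty St.
Proof.
  intros P inst k _ _ _ Hcost.
  set (B := blocking inst).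
  set (V := Vof inst).
  set (Pl := E [] V).
  set (Hadd := filter (hcb inst) Pl).
  set (Hf := Hadd ++ hard0 inst).
  set (Hc := concat (repeat Hadd k)).
  set (F := fun pr : clause * var => map (g (snd pr)) Pl).
  set (S3 := concat (map F inst) ++ Hc).
  assert (Hcnt : forall x, cnt (concat (repeat Pl k)) x <= cnt S3 x).
  { intros q. unfold S3, Hc, Hadd. rewrite cnt_app, !cnt_concat_repeat, cnt_filter.
    pose proof (cnt_soft inst Pl q) as Hs. unfold F.
    fold Pl in Hs.
    destruct (Nat.eq_dec (cnt Pl q) 0) as [E0|Ene]; [rewrite E0; lia|].
    assert (Hin : In q Pl).
    { apply (count_occ_In cdec). unfold cnt in Ene. lia. }
    destruct (leaf_ok inst k q Hcost Hin) as [Hh|Hk].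
    - rewrite Hh. lia.
    - assert (k * cnt Pl q <= cnt Pl q * numgood inst q) by nia.
      destruct (hcb inst q); lia. }
  destruct (sub_perm _ _ Hcnt) as [Rr HRr].
  exists Hf, (repeat [] k ++ Rr). split; [|apply count_empty_rep].
  eapply derives_trans.
  { apply (add_weak P B (hard0 inst) (soft0 inst) Hadd).
    intros C HC. unfold Hadd in HC. apply filter_In in HC. destruct HC as [_ HC].
    unfold hcb in HC. apply existsb_exists in HC. destruct HC as [h [Hh Hf']].
    exists h. split; auto. intros l Hl. rewrite forallb_forall in Hf'.
    specialize (Hf' l Hl). destruct (in_dec _ _ _); [auto|discriminate]. }
  fold Hf.
  change (reach P B Hf (soft0 inst) (repeat [] k ++ Rr)).
  eapply reach_trans.
  { apply (add_hard P B Hf (soft0 inst) Hc). intros C HC. unfold Hc in HC.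
    apply in_concat in HC. destruct HC as [L [HL HCL]]. apply repeat_spec in HL. subst L.
    unfold Hf. apply in_or_app. auto. }
  eapply reach_trans.
  { eapply reach_perm; [| apply Permutation_app_comm | apply Permutation_refl].
    change (soft0 inst) with (map (fun pr : clause * var => [(snd pr, false)]) inst).
    apply (pointwise P B Hf _ (fun pr : clause * var => [(snd pr, false)]) F).
    intros pr R. eapply reach_trans; [apply (tree_split P B Hf V)|].
    rewrite E_app. apply equiv_list. apply forall2_g. }
  fold S3.
  eapply reach_trans; [apply perm_step; exact HRr|].
  apply merge_k.
Qed.
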